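(* Suppose $l$ is $(M,m)$-(restricted smooth, restricted strongly concave) on $\Omega_{2k}$. Then for all subsets $\mathsf{S},\mathsf{T}\subseteq[n]$ of size at most $k$, $$\frac{M}{m}f_{\mathsf{S}}(\mathsf{T})\ \ge\ \sum_{j\in\mathsf{T}}f_{\mathsf{S}}(j)\ \ge\ \frac{m}{M}f_{\mathsf{S}}(\mathsf{T}).$$
   Context: $\Omega_r=\{(\mathbf{x},\mathbf{y})\in\mathbb{R}^n\times\mathbb{R}^n:\|\mathbf{x}\|_0\le r,\|\mathbf{y}\|_0\le r,\|\mathbf{x}-\mathbf{y}\|_0\le r\}$. A differentiable $l:\mathbb{R}^n\to\mathbb{R}$ is $(M,m)$-(restricted smooth, restricted strongly concave) on $\Omega_r$ if for all $(\mathbf{x},\mathbf{y})\in\Omega_r$: $-\tfrac{m}{2}\|\mathbf{y}-\mathbf{x}\|_2^2\ge l(\mathbf{y})-l(\mathbf{x})-\langle\nabla l(\mathbf{x}),\mathbf{y}-\mathbf{x}\rangle\ge -\tfrac{M}{2}\|\mathbf{y}-\mathbf{x}\|_2^2$, with $m,M>0$. For $\mathsf{S}\subseteq[n]$, $\boldsymbol\beta^{(\mathsf{S})}$ is a maximizer of $l$ over vectors supported in $\mathsf{S}$, $f(\mathsf{S})=l(\boldsymbol\beta^{(\mathsf{S})})-l(\mathbf{0})$, $f_{\mathsf{S}}(\mathsf{T})=f(\mathsf{S}\cup\mathsf{T})-f(\mathsf{S})$ and $f_{\mathsf{S}}(j)=f_{\mathsf{S}}(\{j\})$. *)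

(* Defs.v *)
From HB Require Import structures.
From mathcomp Require Import all_boot all_order all_algebra.
From mathcomp Require Import all_classical all_reals topology normedtype derive.
Set Implicit Arguments. Unset Strict Implicit. Unset Printing Implicit Defensive.
Import Order.TTheory GRing.Theory Num.Theory.
Import numFieldNormedType.Exports.
Local Open Scope ring_scope.

Definition l0norm (R : realType) (n : nat) (x : 'rV[R]_n) : nat :=
  #|[set i : 'I_n | x ord0 i != 0]|.

Definition sqnorm2 (R : realType) (n : nat) (x : 'rV[R]_n) : R :=
  \sum_(i < n) (x ord0 i) ^+ 2.

Definition Omega (R : realType) (n r : nat) (x y : 'rV[R]_n) : Prop :=
  [/\ (l0norm x <= r)%N, (l0norm y <= r)%N & (l0norm (x - y) <= r)%N].

(* (M,m)-(restricted smooth, restricted strongly concave) on Omega_r.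
   <grad l(x), y - x> is written as the (Frechet) differential 'd l x (y - x). *)
Definition RSSC (R : realType) (n : nat) (l : 'rV[R]_n -> R) (M m : R) (r : nat)
  : Prop :=
  [/\ 0 < m, 0 < M &
   forall x y : 'rV[R]_n, Omega r x y ->
     - (m / 2) * sqnorm2 (y - x) >= l y - l x - 'd l x (y - x) /\
     l y - l x - 'd l x (y - x) >= - (M / 2) * sqnorm2 (y - x)].

Definition supported_in (R : realType) (n : nat) (S : {set 'I_n}) (x : 'rV[R]_n)
  : Prop := forall i : 'I_n, i \notin S -> x ord0 i = 0.

Definition is_maximizer (R : realType) (n : nat) (l : 'rV[R]_n -> R)
  (S : {set 'I_n}) (b : 'rV[R]_n) : Prop :=
  supported_in S b /\ forall x, supported_in S x -> l x <= l b.

Definition fset (R : realType) (n : nat) (l : 'rV[R]_n -> R)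
  (beta : {set 'I_n} -> 'rV[R]_n) (S : {set 'I_n}) : R :=
  l (beta S) - l 0.

Definition fmarg (R : realType) (n : nat) (l : 'rV[R]_n -> R)
  (beta : {set 'I_n} -> 'rV[R]_n) (S T : {set 'I_n}) : R :=
  fset l beta (S :|: T) - fset l beta S.

(* Main.v *)
Require Import Defs.
From HB Require Import structures.
From mathcomp Require Import all_boot all_order all_algebra.
From mathcomp Require Import all_classical all_reals topology normedtype derive.
From mathcomp Require Import ring lra.
Import Order.TTheory GRing.Theory Num.Theory.
Import numFieldNormedType.Exports.
Set Implicit Arguments. Unset Strict Implicit.
Local Open Scope ring_scope.

Definition gr (R : realType) n (l : 'rV[R]_n -> R) (x : 'rV[R]_n) (j : 'I_n) : R :=
  'd l x (delta_mx ord0 j).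

Lemma dexp (R : realType) n (l : 'rV[R]_n -> R) x (v : 'rV[R]_n) :
  'd l x v = \sum_j v ord0 j * gr l x j.
Proof.
rewrite {1}(row_sum_delta v) linear_sum; apply eq_bigr => j _.
by rewrite linearZ.
Qed.

Lemma supp_l0 (R : realType) n (U : {set 'I_n}) (x : 'rV[R]_n) :
  supported_in U x -> (l0norm x <= #|U|)%N.
Proof.
move=> H; rewrite /l0norm; apply: (@subset_leq_card _ [set i | x ord0 i != 0] U); apply/fintype.subsetP => i; rewrite !inE.
by apply: contraR => /H ->.
Qed.

Lemma supp_add (R : realType) n (U : {set 'I_n}) (x y : 'rV[R]_n) :
  supported_in U x -> supported_in U y -> supported_in U (x + y).
Proof. by move=> Hx Hy i Hi; rewrite mxE Hx // Hy // addr0. Qed.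

Lemma supp_sub (R : realType) n (U : {set 'I_n}) (x y : 'rV[R]_n) :
  supported_in U x -> supported_in U y -> supported_in U (x - y).
Proof. by move=> Hx Hy i Hi; rewrite !mxE Hx // Hy // subr0. Qed.

Lemma supp_mono (R : realType) n (U V : {set 'I_n}) (x : 'rV[R]_n) :
  U \subset V -> supported_in U x -> supported_in V x.
Proof.
move=> sUV Hx i Hi; apply: Hx; apply: contra Hi; exact: (fintype.subsetP sUV).
Qed.

Lemma Omega_supp (R : realType) n r (U : {set 'I_n}) (x y : 'rV[R]_n) :
  supported_in U x -> supported_in U y -> (#|U| <= r)%N -> Omega r x y.
Proof.
move=> Hx Hy Hr; split; apply: leq_trans Hr; apply: supp_l0 => //.
exact: supp_sub.
Qed.

Lemma RSSC_lower (R : realType) n (l : 'rV[R]_n -> R) M m r x v :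
  RSSC l M m r -> Omega r x (x + v) ->
  \sum_j v ord0 j * gr l x j - M / 2 * sqnorm2 v <= l (x + v) - l x.
Proof.
case=> _ _ H /H [_]; rewrite addrAC subrr add0r dexp. lra.
Qed.

Lemma RSSC_upper (R : realType) n (l : 'rV[R]_n -> R) M m r x y :
  RSSC l M m r -> Omega r x y ->
  l y - l x <= \sum_j (y - x) ord0 j * gr l x j - m / 2 * sqnorm2 (y - x).
Proof.
case=> _ _ H /H [+ _]; rewrite dexp. lra.
Qed.

Lemma sqnorm2_row (R : realType) n (f : 'I_n -> R) :
  sqnorm2 (\row_i f i) = \sum_i f i ^+ 2.
Proof. by apply: eq_bigr => i _; rewrite mxE. Qed.
Unset Implicit Arguments. Set Strict Implicit.

Theorem mainTheorem4 (R : realType) (n k : nat) (l : 'rV[R]_n -> R) (M m : R)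
  (beta : {set 'I_n} -> 'rV[R]_n) :
  (forall x : 'rV[R]_n, differentiable l x) ->
  RSSC l M m (2 * k) ->
  (forall S : {set 'I_n}, (#|S| <= 2 * k)%N -> is_maximizer l S (beta S)) ->
  forall S T : {set 'I_n}, (#|S| <= k)%N -> (#|T| <= k)%N ->
    M / m * fmarg l beta S T >= \sum_(j in T) fmarg l beta S [set j] /\
    \sum_(j in T) fmarg l beta S [set j] >= m / M * fmarg l beta S T.
Proof.
move=> _ HR Hmax S T HS HT.
have [m0 M0 _] := HR.
have HS2 : (#|S| <= 2 * k)%N by apply: leq_trans HS _; rewrite leq_pmull.
have HSU : forall U : {set 'I_n}, (#|U| <= k)%N -> (#|S :|: U| <= 2 * k)%N.
  move=> U HU; apply: leq_trans (leq_card_setU S U) _.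
  by rewrite mul2n -addnn leq_add.
set x := beta S.
have [xS xmax] := Hmax S HS2.
set g := gr l x.
have g0 : forall i, i \in S -> g i = 0.
  move=> j jS.
  set v := \row_i (if i == j then g j / M else 0) : 'rV[R]_n.
  have vS : supported_in S v.
    move=> i iS; rewrite mxE; case: ifP => // /eqP eij; by rewrite eij jS in iS.
  have xvS : supported_in S (x + v) by apply: supp_add.
  have := RSSC_lower HR (Omega_supp xS xvS HS2).
  have := xmax _ xvS.
  rewrite sqnorm2_row (bigD1 j) //= big1; last first.
    by move=> i /negPf h; rewrite ?mxE h ?mul0r ?expr0n.
  rewrite (bigD1 j) //= big1; last first.
    by move=> i /negPf h; rewrite ?mxE h ?mul0r ?expr0n.
  rewrite mxE eqxx !addr0 => h1 h2.
  have h3 : g j ^+ 2 / (2 * M) <= 0.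
    have -> : g j ^+ 2 / (2 * M) = g j / M * g j - M / 2 * (g j / M) ^+ 2.
      by field; apply/eqP; lra.
    lra.
  apply/eqP; rewrite -sqrf_eq0 eq_le sqr_ge0 andbT.
  by rewrite -(pmulr_lle0 _ (_ : 0 < (2 * M)^-1)) ?invr_gt0; lra.
have HA : forall U : {set 'I_n}, (#|U| <= k)%N ->
    (\sum_(j in U) g j ^+ 2) / (2 * M) <= fmarg l beta S U.
  move=> U HU.
  set v := \row_i (if i \in U then g i / M else 0) : 'rV[R]_n.
  have vU : supported_in (S :|: U) v.
    by move=> i; rewrite !inE negb_or => /andP [_ iU]; rewrite mxE (negPf iU).
  have xvU : supported_in (S :|: U) (x + v).
    by apply: supp_add => //; apply: supp_mono xS; apply: finset.subsetUl.
  have xU : supported_in (S :|: U) x by apply: supp_mono xS; apply: finset.subsetUl.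
  have := RSSC_lower HR (Omega_supp xU xvU (HSU U HU)).
  have [_ mx2] := Hmax _ (HSU U HU).
  have := mx2 _ xvU.
  rewrite /fmarg /fset -/x sqnorm2_row.
  have -> : \sum_j v ord0 j * g j = \sum_(j in U) g j / M * g j.
    rewrite [RHS]big_mkcond /=; apply: eq_bigr => i _; rewrite mxE.
    by case: (i \in U) => //; rewrite mul0r.
  have -> : \sum_j (if j \in U then g j / M else 0) ^+ 2
           = \sum_(j in U) (g j / M) ^+ 2.
    rewrite [RHS]big_mkcond /=; apply: eq_bigr => i _.
    by case: (i \in U) => //; rewrite expr0n.
  have -> : (\sum_(j in U) g j ^+ 2) / (2 * M) =
     \sum_(j in U) g j / M * g j - M / 2 * \sum_(j in U) (g j / M) ^+ 2.
    rewrite mulr_suml mulr_sumr -sumrB; apply: eq_bigr => i _.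
    by field; apply/eqP; lra.
  lra.
have HB : forall U : {set 'I_n}, (#|U| <= k)%N ->
    fmarg l beta S U <= (\sum_(j in U) g j ^+ 2) / (2 * m).
  move=> U HU.
  have [yU _] := Hmax _ (HSU U HU).
  have xU : supported_in (S :|: U) x by apply: supp_mono xS; apply: finset.subsetUl.
  have := RSSC_upper HR (Omega_supp xU yU (HSU U HU)).
  rewrite /fmarg /fset -/x.
  set y := beta (S :|: U).
  suff : \sum_j (y - x) ord0 j * g j - m / 2 * sqnorm2 (y - x)
         <= (\sum_(j in U) g j ^+ 2) / (2 * m) by lra.
  rewrite /sqnorm2 mulr_sumr -sumrB mulr_suml [X in _ <= X]big_mkcond /=.
  apply: ler_sum => i _.
  case: ifP => iU.
    set w := (y - x) ord0 i.
    rewrite -subr_ge0.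
    have -> : g i ^+ 2 / (2 * m) - (w * g i - m / 2 * w ^+ 2)
            = (g i - m * w) ^+ 2 / (2 * m) by field; apply/eqP; lra.
    by apply: divr_ge0; [apply: sqr_ge0 | lra].
  case: (boolP (i \in S)) => iS.
    rewrite g0 // mulr0 sub0r oppr_le0; apply: mulr_ge0; [lra | exact: sqr_ge0].
  have iSU : i \notin S :|: U by rewrite !inE negb_or iS iU.
  by rewrite (supp_sub yU xU iSU) mul0r expr0n /= mulr0 subrr.
have HA1 := HA T HT; have HB1 := HB T HT.
set G := \sum_(j in T) g j ^+ 2.
have Hj : forall j, j \in T ->
    g j ^+ 2 / (2 * M) <= fmarg l beta S [set j] <= g j ^+ 2 / (2 * m).
  move=> j jT.
  have H1 : (#|[set j]| <= k)%N.
    by rewrite cards1; apply: leq_trans HT; rewrite card_gt0; apply/set0Pn; exists j.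
  have := HA _ H1; have := HB _ H1; rewrite !big_set1 => ? ?; apply/andP; split => //.
have HsA : G / (2 * M) <= \sum_(j in T) fmarg l beta S [set j].
  rewrite /G mulr_suml; apply: ler_sum => j jT; by case/andP: (Hj j jT).
have HsB : \sum_(j in T) fmarg l beta S [set j] <= G / (2 * m).
  rewrite /G mulr_suml; apply: ler_sum => j jT; by case/andP: (Hj j jT).
have e1 : M / m * (G / (2 * M)) = G / (2 * m) by field; apply/andP; split; apply/eqP; lra.
have e2 : m / M * (G / (2 * m)) = G / (2 * M) by field; apply/andP; split; apply/eqP; lra.
have p1 : 0 <= M / m by apply: divr_ge0; lra.
have p2 : 0 <= m / M by apply: divr_ge0; lra.
rewrite /G in e1 e2 HsA HsB.
split.
  have := ler_wpM2l p1 HA1; lra.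
have := ler_wpM2l p2 HB1; lra.
Qed.
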